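(* Let $\mathcal{B}^0\subset\mathbb{R}^6$ be the set of all $(a,b,c,d,e,f)\neq 0$ such that the Type $\mathcal{B}$ model $\mathcal{N}(a,b,c,d,e,f)$ is flat. Define $\mathcal{U}_1(r,s):=(1+rs^2,\,-s(1+rs^2),\,rs,\,-rs^2,\,r,\,-rs)$, $\mathcal{U}_2(u,v):=(u,v,0,0,0,0)$, $\mathcal{U}_3(u,v):=(u,v,0,1+u,0,0)$, and let $\mathcal{B}_i$ be the range of $\mathcal{U}_i$ (over all real parameters). Then $\mathcal{B}^0=(\mathcal{B}_1\cup\mathcal{B}_2\cup\mathcal{B}_3)\setminus\{0\}$. Moreover $\mathcal{B}_2$ and $\mathcal{B}_3$ are closed smooth surfaces in $\mathbb{R}^6$ diffeomorphic to $\mathbb{R}^2$ which intersect transversally along the curve $\{(-1,v,0,0,0,0):v\in\mathbb{R}\}$; and $\mathcal{B}_1$ can be completed to a smooth closed surface $\tilde{\mathcal{B}}_1$ which intersects $\mathcal{B}_2$ transversally along the curve $\{(1,v,0,0,0,0):v\in\mathbb{R}\}$ and intersects $\mathcal{B}_3$ transversally along the curve $\{(0,v,0,1,0,0):v\in\mathbb{R}\}$.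
   Context: For $(a,b,c,d,e,f)\in\mathbb{R}^6$, the Type $\mathcal{B}$ model $\mathcal{N}(a,b,c,d,e,f)$ is $(\mathbb{R}^+\times\mathbb{R},\nabla)$ where $\nabla$ is the torsion free connection with Christoffel symbols ($\nabla_{\partial_{x^i}}\partial_{x^j}=\Gamma_{ij}{}^k\partial_{x^k}$) $\Gamma_{11}{}^1=a/x^1$, $\Gamma_{11}{}^2=b/x^1$, $\Gamma_{12}{}^1=\Gamma_{21}{}^1=c/x^1$, $\Gamma_{12}{}^2=\Gamma_{21}{}^2=d/x^1$, $\Gamma_{22}{}^1=e/x^1$, $\Gamma_{22}{}^2=f/x^1$; this identifies Type $\mathcal{B}$ geometries with $\mathbb{R}^6$. Its Ricci tensor is $\rho=(x^1)^{-2}\begin{pmatrix}(a-d+1)d+b(f-c) & cd-be+f\\ c(d-1)-be & -c^2+fc+(a-d-1)e\end{pmatrix}$, and the model is flat iff $\rho=0$. *)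

(* Defs.v *)
From Stdlib Require Import Reals.
From Coquelicot Require Import Coquelicot.
Open Scope R_scope.

Record P6 := mkP6 { pa : R; pb : R; pc : R; pd : R; pe : R; pf : R }.

Definition zero6 : P6 := mkP6 0 0 0 0 0 0.
Definition add6 (p q : P6) : P6 :=
  mkP6 (pa p + pa q) (pb p + pb q) (pc p + pc q) (pd p + pd q) (pe p + pe q) (pf p + pf q).
Definition scal6 (t : R) (p : P6) : P6 :=
  mkP6 (t * pa p) (t * pb p) (t * pc p) (t * pd p) (t * pe p) (t * pf p).

(** Ricci tensor of the Type B model N(a,b,c,d,e,f) at a point with first
    coordinate x1 > 0 (it does not depend on x2); indices 1,2 as nat. *)
Definition ricci (p : P6) (x1 : R) (i j : nat) : R :=
  let a := pa p in let b := pb p in let c := pc p in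
  let d := pd p in let e := pe p in let f := pf p in
  / (x1 ^ 2) *
  match i, j with
  | 1%nat, 1%nat => (a - d + 1) * d + b * (f - c)
  | 1%nat, 2%nat => c * d - b * e + f
  | 2%nat, 1%nat => c * (d - 1) - b * e
  | _, _ => - c ^ 2 + f * c + (a - d - 1) * e
  end.

Definition flat (p : P6) : Prop :=
  forall x1 : R, 0 < x1 -> forall i j : nat, (1 <= i <= 2)%nat -> (1 <= j <= 2)%nat ->
    ricci p x1 i j = 0.

Definition BB0 (p : P6) : Prop := p <> zero6 /\ flat p.

Definition U1 (r s : R) : P6 :=
  mkP6 (1 + r * s ^ 2) (- s * (1 + r * s ^ 2)) (r * s) (- r * s ^ 2) r (- r * s).
Definition U2 (u v : R) : P6 := mkP6 u v 0 0 0 0.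
Definition U3 (u v : R) : P6 := mkP6 u v 0 (1 + u) 0 0.

Definition BB1 (p : P6) : Prop := exists r s, p = U1 r s.
Definition BB2 (p : P6) : Prop := exists u v, p = U2 u v.
Definition BB3 (p : P6) : Prop := exists u v, p = U3 u v.

(** Topology of R^6 and R^2 (max-norm balls; same topology as Euclidean). *)
Definition ball6 (p : P6) (r : R) (q : P6) : Prop :=
  Rabs (pa q - pa p) < r /\ Rabs (pb q - pb p) < r /\ Rabs (pc q - pc p) < r /\
  Rabs (pd q - pd p) < r /\ Rabs (pe q - pe p) < r /\ Rabs (pf q - pf p) < r.
Definition open6 (W : P6 -> Prop) : Prop :=
  forall p, W p -> exists r, 0 < r /\ forall q, ball6 p r q -> W q.
Definition closed6 (S : P6 -> Prop) : Prop := open6 (fun p => ~ S p).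
Definition closure6 (S : P6 -> Prop) (p : P6) : Prop :=
  forall r, 0 < r -> exists q, S q /\ ball6 p r q.
Definition open2 (O : R -> R -> Prop) : Prop :=
  forall x y, O x y -> exists r, 0 < r /\
    forall x' y', Rabs (x' - x) < r -> Rabs (y' - y) < r -> O x' y'.

Fixpoint Ck (k : nat) (Dom : R -> R -> Prop) (g : R -> R -> R) : Prop :=
  match k with
  | 0%nat => forall x y, Dom x y -> continuity_2d_pt g x y
  | S k' =>
      (forall x y, Dom x y -> continuity_2d_pt g x y) /\
      (forall x y, Dom x y -> ex_derive (fun t => g t y) x /\ ex_derive (fun t => g x t) y) /\
      Ck k' Dom (fun x y => Derive (fun t => g t y) x) /\
      Ck k' Dom (fun x y => Derive (fun t => g x t) y)
  end.

Definition smooth_on (O : R -> R -> Prop) (phi : R -> R -> P6) : Prop :=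
  forall k : nat,
    Ck k O (fun x y => pa (phi x y)) /\ Ck k O (fun x y => pb (phi x y)) /\
    Ck k O (fun x y => pc (phi x y)) /\ Ck k O (fun x y => pd (phi x y)) /\
    Ck k O (fun x y => pe (phi x y)) /\ Ck k O (fun x y => pf (phi x y)).

Definition dx (phi : R -> R -> P6) (x y : R) : P6 :=
  mkP6 (Derive (fun t => pa (phi t y)) x) (Derive (fun t => pb (phi t y)) x)
       (Derive (fun t => pc (phi t y)) x) (Derive (fun t => pd (phi t y)) x)
       (Derive (fun t => pe (phi t y)) x) (Derive (fun t => pf (phi t y)) x).
Definition dy (phi : R -> R -> P6) (x y : R) : P6 :=
  mkP6 (Derive (fun t => pa (phi x t)) y) (Derive (fun t => pb (phi x t)) y)
       (Derive (fun t => pc (phi x t)) y) (Derive (fun t => pd (phi x t)) y)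
       (Derive (fun t => pe (phi x t)) y) (Derive (fun t => pf (phi x t)) y).

Definition immersive_at (phi : R -> R -> P6) (x y : R) : Prop :=
  forall al be : R, add6 (scal6 al (dx phi x y)) (scal6 be (dy phi x y)) = zero6 ->
    al = 0 /\ be = 0.

(** phi restricted to O is a smooth embedding (injective immersion which is a
    homeomorphism onto its image) whose image is exactly S /\ W. *)
Definition chart (S : P6 -> Prop) (W : P6 -> Prop) (O : R -> R -> Prop)
    (phi : R -> R -> P6) : Prop :=
  open6 W /\ open2 O /\ smooth_on O phi /\
  (forall x y, O x y -> S (phi x y) /\ W (phi x y)) /\
  (forall q, S q -> W q -> exists x y, O x y /\ phi x y = q) /\
  (forall x y x' y', O x y -> O x' y' -> phi x y = phi x' y' -> x = x' /\ y = y') /\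
  (forall x y, O x y -> immersive_at phi x y) /\
  (forall x y, O x y -> forall eps, 0 < eps -> exists del, 0 < del /\
     forall x' y', O x' y' -> ball6 (phi x y) del (phi x' y') ->
       Rabs (x' - x) < eps /\ Rabs (y' - y) < eps).

Definition smooth_surface (S : P6 -> Prop) : Prop :=
  forall p, S p -> exists W O phi, chart S W O phi /\ W p.

Definition diffeo_R2 (S : P6 -> Prop) : Prop :=
  exists phi, chart S (fun _ => True) (fun _ _ => True) phi.

Definition tangent (S : P6 -> Prop) (p v : P6) : Prop :=
  exists W O phi x y, chart S W O phi /\ O x y /\ phi x y = p /\
    exists al be, v = add6 (scal6 al (dx phi x y)) (scal6 be (dy phi x y)).

(** Two surfaces intersect exactly along C, and transversally there: at each
    point of C their tangent planes are distinct (in R^6 two surfaces cannot be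
    transversal in the dimension-count sense). *)
Definition transversal_along (S1 S2 C : P6 -> Prop) : Prop :=
  (forall p, (S1 p /\ S2 p) <-> C p) /\
  (forall p, C p -> ~ (forall v, tangent S1 p v <-> tangent S2 p v)).

(* Main.v *)
Require Import Defs.
From Stdlib Require Import Reals Lra Lia Psatz Classical.
From Coquelicot Require Import Coquelicot.
Open Scope R_scope.

Inductive poly2 : (R -> R -> R) -> Prop :=
| P_const c : poly2 (fun _ _ => c)
| P_x : poly2 (fun x _ => x)
| P_y : poly2 (fun _ y => y)
| P_add f g : poly2 f -> poly2 g -> poly2 (fun x y => f x y + g x y)
| P_mul f g : poly2 f -> poly2 g -> poly2 (fun x y => f x y * g x y)
| P_ext f g : (forall x y, f x y = g x y) -> poly2 f -> poly2 g.

Lemma P_opp f : poly2 f -> poly2 (fun x y => - f x y).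
Proof. intro H. apply (P_ext (fun x y => (-1) * f x y)). intros; ring.
apply P_mul; [apply P_const|exact H]. Qed.
Lemma P_sub f g : poly2 f -> poly2 g -> poly2 (fun x y => f x y - g x y).
Proof. intros. apply (P_ext (fun x y => f x y + - g x y)). intros; ring.
apply P_add; [|apply P_opp]; auto. Qed.
Lemma P_pow f n : poly2 f -> poly2 (fun x y => f x y ^ n).
Proof. intro H. induction n.
- apply (P_ext (fun _ _ => 1)). intros; simpl; ring. apply P_const.
- apply (P_ext (fun x y => f x y * f x y ^ n)). intros; simpl; ring. apply P_mul; auto. Qed.

Ltac poly := repeat first [apply P_const | apply P_x | apply P_y | apply P_pow | apply P_sub
  | apply P_opp | apply P_add | apply P_mul ].

Lemma isd_const (c x : R) : is_derive (fun _ : R => c) x 0.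
Proof. auto_derive; auto. Qed.
Lemma isd_id (x : R) : is_derive (fun t : R => t) x 1.
Proof. auto_derive; auto. Qed.
Lemma isd_plus (f g : R -> R) x df dg : is_derive f x df -> is_derive g x dg ->
  is_derive (fun t => f t + g t) x (df + dg).
Proof. intros. apply (is_derive_plus f g); auto. Qed.
Lemma isd_mult (f g : R -> R) x df dg : is_derive f x df -> is_derive g x dg ->
  is_derive (fun t => f t * g t) x (df * g x + f x * dg).
Proof. intros. apply (is_derive_mult f g); auto. intros; apply Rmult_comm. Qed.

Lemma poly2_cont f : poly2 f -> forall x y, continuity_2d_pt f x y.
Proof. induction 1; intros.
- apply continuity_2d_pt_const.
- apply continuity_2d_pt_id1.
- apply continuity_2d_pt_id2.
- apply continuity_2d_pt_plus; auto.
- apply continuity_2d_pt_mult; auto.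
- eapply continuity_2d_pt_ext; eauto. Qed.

Lemma poly2_dx f : poly2 f -> exists f', poly2 f' /\
  forall x y, is_derive (fun t => f t y) x (f' x y).
Proof. induction 1.
- exists (fun _ _ => 0). split. apply P_const. intros; apply isd_const.
- exists (fun _ _ => 1). split. apply P_const. intros; apply isd_id.
- exists (fun _ _ => 0). split. apply P_const. intros; apply isd_const.
- destruct IHpoly2_1 as [f' [Hf Df]]. destruct IHpoly2_2 as [g' [Hg Dg]].
  exists (fun x y => f' x y + g' x y). split. apply P_add; auto.
  intros. apply (isd_plus (fun t => f t y) (fun t => g t y)); auto.
- destruct IHpoly2_1 as [f' [Hf Df]]. destruct IHpoly2_2 as [g' [Hg Dg]].
  exists (fun x y => f' x y * g x y + f x y * g' x y). split. apply P_add; apply P_mul; auto.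
  intros. apply (isd_mult (fun t => f t y) (fun t => g t y)); auto.
- destruct IHpoly2 as [f' [Hf Df]]. exists f'. split; auto.
  intros. eapply is_derive_ext; [|apply Df]. intros; simpl; auto. Qed.

Lemma poly2_dy f : poly2 f -> exists f', poly2 f' /\
  forall x y, is_derive (fun t => f x t) y (f' x y).
Proof. induction 1.
- exists (fun _ _ => 0). split. apply P_const. intros; apply isd_const.
- exists (fun _ _ => 0). split. apply P_const. intros; apply isd_const.
- exists (fun _ _ => 1). split. apply P_const. intros; apply isd_id.
- destruct IHpoly2_1 as [f' [Hf Df]]. destruct IHpoly2_2 as [g' [Hg Dg]].
  exists (fun x y => f' x y + g' x y). split. apply P_add; auto.
  intros. apply (isd_plus (fun t => f x t) (fun t => g x t)); auto.
- destruct IHpoly2_1 as [f' [Hf Df]]. destruct IHpoly2_2 as [g' [Hg Dg]].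
  exists (fun x y => f' x y * g x y + f x y * g' x y). split. apply P_add; apply P_mul; auto.
  intros. apply (isd_mult (fun t => f x t) (fun t => g x t)); auto.
- destruct IHpoly2 as [f' [Hf Df]]. exists f'. split; auto.
  intros. eapply is_derive_ext; [|apply Df]. intros; simpl; auto. Qed.

Lemma poly2_Ck k : forall f, poly2 f -> forall D, Ck k D f.
Proof. induction k; intros f Hf D; simpl.
- intros; apply poly2_cont; auto.
- destruct (poly2_dx f Hf) as [f' [Hf' Df]]. destruct (poly2_dy f Hf) as [g' [Hg' Dg]].
  split; [intros; apply poly2_cont; auto|]. split.
  + intros; split; eexists; eauto.
  + split; apply IHk.
    * apply (P_ext f'); auto. intros; symmetry; apply is_derive_unique; auto.
    * apply (P_ext g'); auto. intros; symmetry; apply is_derive_unique; auto. Qed.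

Lemma smooth_poly O phi :
  poly2 (fun x y => pa (phi x y)) -> poly2 (fun x y => pb (phi x y)) ->
  poly2 (fun x y => pc (phi x y)) -> poly2 (fun x y => pd (phi x y)) ->
  poly2 (fun x y => pe (phi x y)) -> poly2 (fun x y => pf (phi x y)) ->
  smooth_on O phi.
Proof. intros; intro k; repeat split; apply poly2_Ck; auto. Qed.

Definition psi (t b : R) : P6 :=
  mkP6 (- b * t) b (- (1 + b * t) * t) (1 + b * t) (- (1 + b * t) * t ^ 2) ((1 + b * t) * t).

Lemma smooth_U1 O : smooth_on O U1.
Proof. apply smooth_poly; simpl; poly. Qed.
Lemma smooth_U2 O : smooth_on O U2.
Proof. apply smooth_poly; simpl; poly. Qed.
Lemma smooth_U3 O : smooth_on O U3.
Proof. apply smooth_poly; simpl; poly. Qed.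
Lemma smooth_psi O : smooth_on O psi.
Proof. apply smooth_poly; simpl; poly. Qed.

Definition cont6 (P : P6 -> R) (q : P6) : Prop :=
  forall eps, 0 < eps -> exists del, 0 < del /\
    forall q', ball6 q del q' -> Rabs (P q' - P q) < eps.

Lemma cont6_const k q : cont6 (fun _ => k) q.
Proof. intros e He. exists 1. split. lra. intros. rewrite Rminus_eq_0, Rabs_R0; auto. Qed.

Lemma cont6_pa q : cont6 pa q. Proof. intros e He; exists e; split; auto; intros q' [H _]; auto. Qed.
Lemma cont6_pb q : cont6 pb q. Proof. intros e He; exists e; split; auto; intros q' [_ [H _]]; auto. Qed.
Lemma cont6_pc q : cont6 pc q. Proof. intros e He; exists e; split; auto; intros q' [_ [_ [H _]]]; auto. Qed.
Lemma cont6_pd q : cont6 pd q. Proof. intros e He; exists e; split; auto; intros q' [_ [_ [_ [H _]]]]; auto. Qed.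
Lemma cont6_pe q : cont6 pe q. Proof. intros e He; exists e; split; auto; intros q' [_ [_ [_ [_ [H _]]]]]; auto. Qed.
Lemma cont6_pf q : cont6 pf q. Proof. intros e He; exists e; split; auto; intros q' [_ [_ [_ [_ [_ H]]]]]; auto. Qed.

Lemma ball6_mono q r r' q' : ball6 q r q' -> r <= r' -> ball6 q r' q'.
Proof. unfold ball6; intros; lra. Qed.

Lemma cont6_comp g P Q q : cont6 P q -> cont6 Q q -> continuity_2d_pt g (P q) (Q q) ->
  cont6 (fun q => g (P q) (Q q)) q.
Proof. intros HP HQ Hg e He.
  destruct (Hg (mkposreal e He)) as [d Hd].
  destruct (HP d (cond_pos d)) as [d1 [Hd1 H1]].
  destruct (HQ d (cond_pos d)) as [d2 [Hd2 H2]].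
  exists (Rmin d1 d2). split. apply Rmin_pos; auto.
  intros q' Hq. apply (Hd (P q') (Q q')).
  apply H1; eapply ball6_mono; eauto; apply Rmin_l.
  apply H2; eapply ball6_mono; eauto; apply Rmin_r. Qed.

Lemma cont6_plus P Q q : cont6 P q -> cont6 Q q -> cont6 (fun q => P q + Q q) q.
Proof. intros. apply (cont6_comp (fun x y => x + y)); auto.
  apply continuity_2d_pt_plus; [apply continuity_2d_pt_id1|apply continuity_2d_pt_id2]. Qed.
Lemma cont6_minus P Q q : cont6 P q -> cont6 Q q -> cont6 (fun q => P q - Q q) q.
Proof. intros. apply (cont6_comp (fun x y => x - y)); auto.
  apply continuity_2d_pt_minus; [apply continuity_2d_pt_id1|apply continuity_2d_pt_id2]. Qed.
Lemma cont6_mult P Q q : cont6 P q -> cont6 Q q -> cont6 (fun q => P q * Q q) q.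
Proof. intros. apply (cont6_comp (fun x y => x * y)); auto.
  apply continuity_2d_pt_mult; [apply continuity_2d_pt_id1|apply continuity_2d_pt_id2]. Qed.
Lemma cont6_opp P q : cont6 P q -> cont6 (fun q => - P q) q.
Proof. intros. apply (cont6_comp (fun x y => - x) P P); auto.
  apply continuity_2d_pt_opp; apply continuity_2d_pt_id1. Qed.
Lemma cont6_div P Q q : cont6 P q -> cont6 Q q -> Q q <> 0 -> cont6 (fun q => P q / Q q) q.
Proof. intros. apply (cont6_comp (fun x y => x / y)); auto.
  apply continuity_2d_pt_mult; [apply continuity_2d_pt_id1|].
  apply continuity_2d_pt_inv; auto. apply continuity_2d_pt_id2. Qed.
Lemma cont6_pow P n q : cont6 P q -> cont6 (fun q => P q ^ n) q.
Proof. intros H. induction n.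
- simpl. apply cont6_const.
- simpl. apply cont6_mult; auto. Qed.

Ltac cont6 := repeat first [apply cont6_const | apply cont6_pa | apply cont6_pb | apply cont6_pc
  | apply cont6_pd | apply cont6_pe | apply cont6_pf | apply cont6_pow | apply cont6_plus
  | apply cont6_minus | apply cont6_opp | apply cont6_mult].

Lemma cont6_nz P q : cont6 P q -> P q <> 0 -> exists del, 0 < del /\
  forall q', ball6 q del q' -> P q' <> 0.
Proof. intros HP Hn. destruct (HP (Rabs (P q))) as [d [Hd H]]. apply Rabs_pos_lt; auto.
  exists d; split; auto. intros q' Hq E. specialize (H q' Hq). rewrite E in H.
  rewrite Rminus_0_l, Rabs_Ropp in H. lra. Qed.

Lemma open_crit (W : P6 -> Prop) :
  (forall q, W q -> exists P, cont6 P q /\ P q <> 0 /\ forall q', P q' <> 0 -> W q') -> open6 W.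
Proof. intros H q Wq. destruct (H q Wq) as [P [HP [Hn HW]]].
  destruct (cont6_nz P q HP Hn) as [d [Hd Hb]]. exists d; split; auto. Qed.

Definition F1 p := (pa p - pd p + 1) * pd p + pb p * (pf p - pc p).
Definition F2 p := pc p * pd p - pb p * pe p + pf p.
Definition F3 p := pc p * (pd p - 1) - pb p * pe p.
Definition F4 p := - pc p ^ 2 + pf p * pc p + (pa p - pd p - 1) * pe p.

Lemma flat_iff p : flat p <-> (F1 p = 0 /\ F2 p = 0 /\ F3 p = 0 /\ F4 p = 0).
Proof. split.
- intro H. unfold flat, ricci in H.
  assert (G : forall i j, (1 <= i <= 2)%nat -> (1 <= j <= 2)%nat -> ricci p 1 i j = 0).
  { intros. apply H; auto; lra. }
  unfold ricci in G.
  pose proof (G 1%nat 1%nat ltac:(lia) ltac:(lia)) as G11.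
  pose proof (G 1%nat 2%nat ltac:(lia) ltac:(lia)) as G12.
  pose proof (G 2%nat 1%nat ltac:(lia) ltac:(lia)) as G21.
  pose proof (G 2%nat 2%nat ltac:(lia) ltac:(lia)) as G22.
  simpl in G11, G12, G21, G22. unfold F1, F2, F3, F4.
  replace (/ (1 * 1)) with 1 in * by field. lra.
- intros [H1 [H2 [H3 H4]]] x1 Hx i j Hi Hj. unfold F1, F2, F3, F4 in *. unfold ricci.
  destruct i as [|[|[|i]]]; try lia; destruct j as [|[|[|j]]]; try lia;
  [rewrite H1|rewrite H2|rewrite H3|rewrite H4]; ring. Qed.

Definition Lset (q : P6) : Prop := exists v, q = mkP6 0 v 0 1 0 0.

Lemma classify p : F1 p = 0 -> F2 p = 0 -> F3 p = 0 -> F4 p = 0 ->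
  (pe p <> 0 /\ p = U1 (pe p) (pc p / pe p)) \/
  (pc p = 0 /\ pe p = 0 /\ pf p = 0 /\ (pd p = 0 \/ pd p = pa p + 1)).
Proof. destruct p as [a b c d e f]. unfold F1, F2, F3, F4; cbn [pa pb pc pd pe pf]. intros H1 H2 H3 H4.
  assert (Hf : f = - c) by lra. subst f.
  destruct (Req_dec e 0) as [He|He].
  - subst e. right. assert (c = 0) by nra. subst c.
    split; auto. split; auto. split. ring.
    destruct (Req_dec d 0); [left; auto | right; nra].
  - left. split; auto.
    assert (E : e * ((a - d + 1) * d + b * (- c - c)) - d * (- c ^ 2 + - c * c + (a - d - 1) * e)
       - 2 * c * (c * (d - 1) - b * e) = 2 * (d * e + c ^ 2)) by ring.
    rewrite H1, H3, H4 in E. assert (Hd : d * e = - c ^ 2) by lra.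
    unfold U1. f_equal; field_simplify_eq; auto.
    + lra.
    + assert (X : b * e ^ 2 + c ^ 3 + c * e = - e * (c * (d - 1) - b * e) + c * (d * e + c ^ 2)) by ring.
      rewrite H3, Hd in X. lra.
    + assert (X : d * e ^ 2 + e * c ^ 2 = e * (d * e + c ^ 2)) by ring. rewrite Hd in X. lra.
Qed.

Ltac inj H := injection H; clear H; intros.

Lemma U1_flat r s : F1 (U1 r s) = 0 /\ F2 (U1 r s) = 0 /\ F3 (U1 r s) = 0 /\ F4 (U1 r s) = 0.
Proof. unfold F1, F2, F3, F4, U1; cbn [pa pb pc pd pe pf]; repeat split; ring. Qed.

Lemma part1 p : BB0 p <-> ((BB1 p \/ BB2 p \/ BB3 p) /\ p <> zero6).
Proof. unfold BB0. rewrite flat_iff. split.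
- intros [Hz [H1 [H2 [H3 H4]]]]. split; auto.
  destruct (classify p H1 H2 H3 H4) as [[He E]|[Hc [He [Hf [Hd|Hd]]]]].
  + left. exists (pe p), (pc p / pe p). auto.
  + right; left. exists (pa p), (pb p). destruct p; cbn in *; subst; auto.
  + right; right. exists (pa p), (pb p). destruct p; cbn in *; subst. unfold U3. f_equal; ring.
- intros [H Hz]. split; auto.
  destruct H as [[r [s E]]|[[u [v E]]|[u [v E]]]]; subst.
  + apply U1_flat.
  + unfold F1, F2, F3, F4, U2; cbn [pa pb pc pd pe pf]; repeat split; ring.
  + unfold F1, F2, F3, F4, U3; cbn [pa pb pc pd pe pf]; repeat split; ring.
Qed.

Definition BB1t (p : P6) : Prop := BB1 p \/ Lset p.

Lemma BB1t_iff p : BB1t p <-> (F1 p = 0 /\ F2 p = 0 /\ F3 p = 0 /\ F4 p = 0 /\ pa p + pd p - 1 = 0).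
Proof. split.
- intros [[r [s E]]|[v E]]; subst.
  + pose proof (U1_flat r s). unfold U1 in *; cbn [pa pd] in *. intuition. ring.
  + unfold F1, F2, F3, F4; cbn [pa pb pc pd pe pf]; repeat split; ring.
- intros [H1 [H2 [H3 [H4 H5]]]].
  destruct (classify p H1 H2 H3 H4) as [[He E]|[Hc [He [Hf [Hd|Hd]]]]].
  + left. exists (pe p), (pc p / pe p). auto.
  + left. exists 0, (- pb p). destruct p; cbn in *; subst. unfold U1. f_equal; ring_simplify; lra.
  + right. exists (pb p). destruct p; cbn in *; subst. f_equal; lra.
Qed.

Lemma closed_BB1t : closed6 BB1t.
Proof. apply open_crit. intros q Hq.
  assert (G : forall P, cont6 P q -> P q <> 0 -> (forall q', BB1t q' -> P q' = 0) ->
    exists P, cont6 P q /\ P q <> 0 /\ forall q', P q' <> 0 -> ~ BB1t q').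
  { intros P HP Hn HB. exists P. split; [exact HP|split; [exact Hn|]]. intros q' Hq' Hb. apply Hq'. apply HB. exact Hb. }
  destruct (Req_dec (F1 q) 0) as [E1|E1].
  2:{ apply (G F1); auto. unfold F1; cont6. intros q' Hb; apply BB1t_iff in Hb; tauto. }
  destruct (Req_dec (F2 q) 0) as [E2|E2].
  2:{ apply (G F2); auto. unfold F2; cont6. intros q' Hb; apply BB1t_iff in Hb; tauto. }
  destruct (Req_dec (F3 q) 0) as [E3|E3].
  2:{ apply (G F3); auto. unfold F3; cont6. intros q' Hb; apply BB1t_iff in Hb; tauto. }
  destruct (Req_dec (F4 q) 0) as [E4|E4].
  2:{ apply (G F4); auto. unfold F4; cont6. intros q' Hb; apply BB1t_iff in Hb; tauto. }
  destruct (Req_dec (pa q + pd q - 1) 0) as [E5|E5].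
  2:{ apply (G (fun q => pa q + pd q - 1)); auto. cont6. intros q' Hb; apply BB1t_iff in Hb; tauto. }
  exfalso. apply Hq. apply BB1t_iff. auto. Qed.

Lemma closed_BB2 : closed6 BB2.
Proof. apply open_crit. intros q Hq.
  assert (HB : forall q', BB2 q' -> pc q' = 0 /\ pd q' = 0 /\ pe q' = 0 /\ pf q' = 0).
  { intros q' [u [v E]]; subst; cbn; auto. }
  assert (G : forall P, cont6 P q -> P q <> 0 -> (forall q', BB2 q' -> P q' = 0) ->
    exists P, cont6 P q /\ P q <> 0 /\ forall q', P q' <> 0 -> ~ BB2 q').
  { intros P HP Hn HB'. exists P. split; [exact HP|split; [exact Hn|]]. intros q' Hq' Hb. apply Hq'. apply HB'. exact Hb. }
  destruct (Req_dec (pc q) 0). 2:{ apply (G pc); [cont6|auto|]. intros q' Hb; apply HB in Hb; tauto. }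
  destruct (Req_dec (pd q) 0). 2:{ apply (G pd); [cont6|auto|]. intros q' Hb; apply HB in Hb; tauto. }
  destruct (Req_dec (pe q) 0). 2:{ apply (G pe); [cont6|auto|]. intros q' Hb; apply HB in Hb; tauto. }
  destruct (Req_dec (pf q) 0). 2:{ apply (G pf); [cont6|auto|]. intros q' Hb; apply HB in Hb; tauto. }
  exfalso. apply Hq. exists (pa q), (pb q). destruct q; cbn in *; subst; auto. Qed.

Lemma closed_BB3 : closed6 BB3.
Proof. apply open_crit. intros q Hq.
  assert (HB : forall q', BB3 q' -> pc q' = 0 /\ pd q' - pa q' - 1 = 0 /\ pe q' = 0 /\ pf q' = 0).
  { intros q' [u [v E]]; subst; cbn; repeat split; ring. }
  assert (G : forall P, cont6 P q -> P q <> 0 -> (forall q', BB3 q' -> P q' = 0) ->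
    exists P, cont6 P q /\ P q <> 0 /\ forall q', P q' <> 0 -> ~ BB3 q').
  { intros P HP Hn HB'. exists P. split; [exact HP|split; [exact Hn|]]. intros q' Hq' Hb. apply Hq'. apply HB'. exact Hb. }
  destruct (Req_dec (pc q) 0). 2:{ apply (G pc); [cont6|auto|]. intros q' Hb; apply HB in Hb; tauto. }
  destruct (Req_dec (pd q - pa q - 1) 0). 2:{ apply (G (fun q => pd q - pa q - 1)); [cont6|auto|]. intros q' Hb; apply HB in Hb; tauto. }
  destruct (Req_dec (pe q) 0). 2:{ apply (G pe); [cont6|auto|]. intros q' Hb; apply HB in Hb; tauto. }
  destruct (Req_dec (pf q) 0). 2:{ apply (G pf); [cont6|auto|]. intros q' Hb; apply HB in Hb; tauto. }
  exfalso. apply Hq. exists (pa q), (pb q). destruct q; cbn in *; subst. unfold U3; f_equal; lra. Qed.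

Ltac dcomp := unfold dx, dy; cbn [pa pb pc pd pe pf U1 U2 U3 psi]; f_equal;
  apply is_derive_unique; auto_derive; try exact I; try ring.

Lemma dx_U1 r s : dx U1 r s = mkP6 (s^2) (-s^3) s (-s^2) 1 (-s).
Proof. unfold U1; dcomp. Qed.
Lemma dy_U1 r s : dy U1 r s = mkP6 (2*r*s) (-(1+3*r*s^2)) r (-2*r*s) 0 (-r).
Proof. unfold U1; dcomp. Qed.
Lemma dx_U2 x y : dx U2 x y = mkP6 1 0 0 0 0 0.
Proof. unfold U2; dcomp. Qed.
Lemma dy_U2 x y : dy U2 x y = mkP6 0 1 0 0 0 0.
Proof. unfold U2; dcomp. Qed.
Lemma dx_U3 x y : dx U3 x y = mkP6 1 0 0 1 0 0.
Proof. unfold U3; dcomp. Qed.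
Lemma dy_U3 x y : dy U3 x y = mkP6 0 1 0 0 0 0.
Proof. unfold U3; dcomp. Qed.
Lemma dx_psi t b : dx psi t b = mkP6 (-b) 0 (-(1+2*b*t)) b (-(2*t+3*b*t^2)) (1+2*b*t).
Proof. unfold psi; dcomp. Qed.
Lemma dy_psi t b : dy psi t b = mkP6 (-t) 1 (-t^2) t (-t^3) (t^2).
Proof. unfold psi; dcomp. Qed.

Lemma open6_True : open6 (fun _ => True).
Proof. intros p _. exists 1. split; auto; lra. Qed.
Lemma open2_True : open2 (fun _ _ => True).
Proof. intros x y _. exists 1. split; auto; lra. Qed.

Ltac imm_eqs H := unfold add6, scal6, zero6 in H; cbn [pa pb pc pd pe pf] in H; injection H; clear H; intros.

Lemma chart_U2 : chart BB2 (fun _ => True) (fun _ _ => True) U2.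
Proof. split; [apply open6_True|]. split; [apply open2_True|]. split; [apply smooth_U2|].
  split. { intros; split; auto. exists x, y; auto. }
  split. { intros q [u [v E]] _. exists u, v. auto. }
  split. { intros x y x' y' _ _ E. unfold U2 in E. inj E. auto. }
  split. { intros x y _ al be H. rewrite dx_U2, dy_U2 in H. imm_eqs H. lra. }
  intros x y _ eps Heps. exists eps. split; auto. intros x' y' _ [H1 [H2 _]].
  unfold U2 in *; cbn in *; auto. Qed.

Lemma chart_U3 : chart BB3 (fun _ => True) (fun _ _ => True) U3.
Proof. split; [apply open6_True|]. split; [apply open2_True|]. split; [apply smooth_U3|].
  split. { intros; split; auto. exists x, y; auto. }
  split. { intros q [u [v E]] _. exists u, v. auto. }
  split. { intros x y x' y' _ _ E. unfold U3 in E. inj E. auto. }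
  split. { intros x y _ al be H. rewrite dx_U3, dy_U3 in H. imm_eqs H. lra. }
  intros x y _ eps Heps. exists eps. split; auto. intros x' y' _ [H1 [H2 _]].
  unfold U3 in *; cbn in *; auto. Qed.

Definition Mset (q : P6) : Prop := exists r, q = mkP6 1 0 0 0 r 0.

Lemma open_notL : open6 (fun q => ~ Lset q).
Proof. apply open_crit. intros q Hq.
  assert (HB : forall q', Lset q' -> pa q' = 0 /\ pc q' = 0 /\ pd q' - 1 = 0 /\ pe q' = 0 /\ pf q' = 0).
  { intros q' [v E]; subst; cbn; repeat split; ring. }
  assert (G : forall P, cont6 P q -> P q <> 0 -> (forall q', Lset q' -> P q' = 0) ->
    exists P, cont6 P q /\ P q <> 0 /\ forall q', P q' <> 0 -> ~ Lset q').
  { intros P HP Hn HB'. exists P. split; [exact HP|split; [exact Hn|]]. intros q' Hq' Hb. apply Hq'. apply HB'. exact Hb. }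
  destruct (Req_dec (pa q) 0). 2:{ apply (G pa); [cont6|auto|]. intros q' Hb; apply HB in Hb; tauto. }
  destruct (Req_dec (pc q) 0). 2:{ apply (G pc); [cont6|auto|]. intros q' Hb; apply HB in Hb; tauto. }
  destruct (Req_dec (pd q - 1) 0). 2:{ apply (G (fun q => pd q - 1)); [cont6|auto|]. intros q' Hb; apply HB in Hb; tauto. }
  destruct (Req_dec (pe q) 0). 2:{ apply (G pe); [cont6|auto|]. intros q' Hb; apply HB in Hb; tauto. }
  destruct (Req_dec (pf q) 0). 2:{ apply (G pf); [cont6|auto|]. intros q' Hb; apply HB in Hb; tauto. }
  exfalso. apply Hq. exists (pb q). destruct q; cbn in *; subst. f_equal; lra. Qed.

Lemma open_notM : open6 (fun q => ~ Mset q).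
Proof. apply open_crit. intros q Hq.
  assert (HB : forall q', Mset q' -> pa q' - 1 = 0 /\ pb q' = 0 /\ pc q' = 0 /\ pd q' = 0 /\ pf q' = 0).
  { intros q' [v E]; subst; cbn; repeat split; ring. }
  assert (G : forall P, cont6 P q -> P q <> 0 -> (forall q', Mset q' -> P q' = 0) ->
    exists P, cont6 P q /\ P q <> 0 /\ forall q', P q' <> 0 -> ~ Mset q').
  { intros P HP Hn HB'. exists P. split; [exact HP|split; [exact Hn|]]. intros q' Hq' Hb. apply Hq'. apply HB'. exact Hb. }
  destruct (Req_dec (pa q - 1) 0). 2:{ apply (G (fun q => pa q - 1)); [cont6|auto|]. intros q' Hb; apply HB in Hb; tauto. }
  destruct (Req_dec (pb q) 0). 2:{ apply (G pb); [cont6|auto|]. intros q' Hb; apply HB in Hb; tauto. }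
  destruct (Req_dec (pc q) 0). 2:{ apply (G pc); [cont6|auto|]. intros q' Hb; apply HB in Hb; tauto. }
  destruct (Req_dec (pd q) 0). 2:{ apply (G pd); [cont6|auto|]. intros q' Hb; apply HB in Hb; tauto. }
  destruct (Req_dec (pf q) 0). 2:{ apply (G pf); [cont6|auto|]. intros q' Hb; apply HB in Hb; tauto. }
  exfalso. apply Hq. exists (pe q). destruct q; cbn in *; subst. f_equal; lra. Qed.

Lemma Rmin3_pos a b c : 0 < a -> 0 < b -> 0 < c -> 0 < Rmin a (Rmin b c).
Proof. intros; repeat apply Rmin_pos; auto. Qed.
Lemma Rmin3_1 a b c : Rmin a (Rmin b c) <= a. Proof. apply Rmin_l. Qed.
Lemma Rmin3_2 a b c : Rmin a (Rmin b c) <= b.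
Proof. eapply Rle_trans; [apply Rmin_r|apply Rmin_l]. Qed.
Lemma Rmin3_3 a b c : Rmin a (Rmin b c) <= c.
Proof. eapply Rle_trans; [apply Rmin_r|apply Rmin_r]. Qed.

Lemma chart_U1 : chart BB1t (fun q => ~ Lset q) (fun _ _ => True) U1.
Proof. split; [apply open_notL|]. split; [apply open2_True|]. split; [apply smooth_U1|].
  split. { intros r s _; split. left; exists r, s; auto.
    intros [v E]. unfold U1 in E. inj E. nra. }
  split. { intros q [[r [s E]]|HL] HnL. exists r, s; auto. tauto. }
  split. { intros r s r' s' _ _ E. unfold U1 in E. inj E. subst.
    destruct (Req_dec r' 0). subst. split; auto. nra.
    split; auto. apply (Rmult_eq_reg_l r'); auto. }
  split. { intros r s _ al be H. rewrite dx_U1, dy_U1 in H. imm_eqs H.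
    assert (al = 0) by lra. subst. split; auto.
    destruct (Req_dec be 0); auto. assert (r = 0) by (apply (Rmult_eq_reg_l be); lra). subst. nra. }
  intros r s _ eps Heps.
  destruct (Req_dec (1 + r * s ^ 2) 0) as [Ha|Ha].
  - assert (Hr : r <> 0) by (intro; subst; nra).
    assert (HP : cont6 (fun q => pc q / pe q) (U1 r s)) by (apply cont6_div; [cont6|cont6|exact Hr]).
    destruct (HP eps Heps) as [d1 [Hd1 H1]].
    destruct (cont6_nz pe (U1 r s) (cont6_pe _) Hr) as [d2 [Hd2 H2]].
    exists (Rmin eps (Rmin d1 d2)). split. apply Rmin3_pos; auto.
    intros r' s' _ Hb.
    assert (Hb1 := ball6_mono _ _ _ _ Hb (Rmin3_2 eps d1 d2)).
    assert (Hb2 := ball6_mono _ _ _ _ Hb (Rmin3_3 eps d1 d2)).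
    assert (Hb0 := ball6_mono _ _ _ _ Hb (Rmin3_1 eps d1 d2)).
    specialize (H1 _ Hb1). specialize (H2 _ Hb2). cbn [U1 pc pe] in H1, H2.
    destruct Hb0 as [_ [_ [_ [_ [Be _]]]]]. cbn [U1 pe] in Be. split; auto.
    replace (r' * s' / r') with s' in H1 by (field; auto).
    replace (r * s / r) with s in H1 by (field; auto). auto.
  - assert (HP : cont6 (fun q => - pb q / pa q) (U1 r s)) by (apply cont6_div; [cont6|cont6|exact Ha]).
    destruct (HP eps Heps) as [d1 [Hd1 H1]].
    destruct (cont6_nz pa (U1 r s) (cont6_pa _) Ha) as [d2 [Hd2 H2]].
    exists (Rmin eps (Rmin d1 d2)). split. apply Rmin3_pos; auto.
    intros r' s' _ Hb.
    assert (Hb1 := ball6_mono _ _ _ _ Hb (Rmin3_2 eps d1 d2)).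
    assert (Hb2 := ball6_mono _ _ _ _ Hb (Rmin3_3 eps d1 d2)).
    assert (Hb0 := ball6_mono _ _ _ _ Hb (Rmin3_1 eps d1 d2)).
    specialize (H1 _ Hb1). specialize (H2 _ Hb2). cbn [U1 pa pb] in H1, H2.
    destruct Hb0 as [_ [_ [_ [_ [Be _]]]]]. cbn [U1 pe] in Be. split; auto.
    replace (- (- s' * (1 + r' * s' ^ 2)) / (1 + r' * s' ^ 2)) with s' in H1 by (field; auto).
    replace (- (- s * (1 + r * s ^ 2)) / (1 + r * s ^ 2)) with s in H1 by (field; auto). auto.
Qed.

Lemma chart_psi : chart BB1t (fun q => ~ Mset q) (fun _ _ => True) psi.
Proof. split; [apply open_notM|]. split; [apply open2_True|]. split; [apply smooth_psi|].
  split. { intros t b _; split.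
    - destruct (Req_dec t 0) as [Ht|Ht].
      + right. exists b. subst. unfold psi. f_equal; ring.
      + left. exists (- (1 + b * t) * t ^ 2), (1 / t). unfold psi, U1. f_equal; field; auto.
    - intros [v E]. unfold psi in E. inj E. subst. lra. }
  split. { intros q [[r [s E]]|[v E]] HnM; subst.
    - destruct (Req_dec s 0) as [Hs|Hs].
      + exfalso. apply HnM. exists r. subst. unfold U1. f_equal; ring.
      + exists (1 / s), (- s * (1 + r * s ^ 2)). split; auto. unfold psi, U1. f_equal; field; auto.
    - exists 0, v. split; auto. unfold psi. f_equal; ring. }
  split. { intros t b t' b' _ _ E. unfold psi in E. inj E. subst. split; auto.
    destruct (Req_dec (1 + b' * t) 0) as [Hd|Hd].
    + assert (b' <> 0) by (intro; subst; lra). apply (Rmult_eq_reg_l b'); auto; nra.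
    + apply (Rmult_eq_reg_l (1 + b' * t)); auto. rewrite H, <- H1; reflexivity. }
  split. { intros t b _ al be H. rewrite dx_psi, dy_psi in H. imm_eqs H.
    assert (be = 0) by lra. subst. split; auto.
    destruct (Req_dec al 0); auto. assert (b = 0) by (apply (Rmult_eq_reg_l al); lra). subst. nra. }
  intros t b _ eps Heps.
  destruct (Req_dec (1 + b * t) 0) as [Hd|Hd].
  - assert (Hb : b <> 0) by (intro; subst; lra).
    assert (HP : cont6 (fun q => - pa q / pb q) (psi t b)) by (apply cont6_div; [cont6|cont6|exact Hb]).
    destruct (HP eps Heps) as [d1 [Hd1 H1]].
    destruct (cont6_nz pb (psi t b) (cont6_pb _) Hb) as [d2 [Hd2 H2]].
    exists (Rmin eps (Rmin d1 d2)). split. apply Rmin3_pos; auto.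
    intros t' b' _ HB.
    assert (Hb1 := ball6_mono _ _ _ _ HB (Rmin3_2 eps d1 d2)).
    assert (Hb2 := ball6_mono _ _ _ _ HB (Rmin3_3 eps d1 d2)).
    assert (Hb0 := ball6_mono _ _ _ _ HB (Rmin3_1 eps d1 d2)).
    specialize (H1 _ Hb1). specialize (H2 _ Hb2). cbn [psi pa pb] in H1, H2.
    destruct Hb0 as [_ [Bb _]]. cbn [psi pb] in Bb. split; auto.
    replace (- (- b' * t') / b') with t' in H1 by (field; auto).
    replace (- (- b * t) / b) with t in H1 by (field; auto). auto.
  - assert (HP : cont6 (fun q => - pc q / pd q) (psi t b)) by (apply cont6_div; [cont6|cont6|exact Hd]).
    destruct (HP eps Heps) as [d1 [Hd1 H1]].
    destruct (cont6_nz pd (psi t b) (cont6_pd _) Hd) as [d2 [Hd2 H2]].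
    exists (Rmin eps (Rmin d1 d2)). split. apply Rmin3_pos; auto.
    intros t' b' _ HB.
    assert (Hb1 := ball6_mono _ _ _ _ HB (Rmin3_2 eps d1 d2)).
    assert (Hb2 := ball6_mono _ _ _ _ HB (Rmin3_3 eps d1 d2)).
    assert (Hb0 := ball6_mono _ _ _ _ HB (Rmin3_1 eps d1 d2)).
    specialize (H1 _ Hb1). specialize (H2 _ Hb2). cbn [psi pc pd] in H1, H2.
    destruct Hb0 as [_ [Bb _]]. cbn [psi pb] in Bb. split; auto.
    replace (- (- (1 + b' * t') * t') / (1 + b' * t')) with t' in H1 by (field; auto).
    replace (- (- (1 + b * t) * t) / (1 + b * t)) with t in H1 by (field; auto). auto.
Qed.

Lemma open2_loc O x y : open2 O -> O x y ->
  locally x (fun t => O t y) /\ locally y (fun t => O x t).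
Proof. intros HO Hxy. destruct (HO x y Hxy) as [r [Hr H]]. split.
  - exists (mkposreal r Hr). intros t Ht. apply H. exact Ht. rewrite Rminus_eq_0, Rabs_R0; auto.
  - exists (mkposreal r Hr). intros t Ht. apply H. rewrite Rminus_eq_0, Rabs_R0; auto. exact Ht. Qed.

Lemma tangent_zero S p v (g : P6 -> R) k :
  (forall q, S q -> g q = k) -> tangent S p v ->
  exists W O phi x y, chart S W O phi /\ O x y /\
   Derive (fun t => g (phi t y)) x = 0 /\ Derive (fun t => g (phi x t)) y = 0 /\
   exists al be, v = add6 (scal6 al (dx phi x y)) (scal6 be (dy phi x y)).
Proof. intros Hg [W [O [phi [x [y [Hch [Hxy [Hp Hv]]]]]]]].
  exists W, O, phi, x, y. split; auto. split; auto.
  destruct Hch as [_ [HO [_ [HS _]]]]. destruct (open2_loc O x y HO Hxy) as [Lx Ly].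
  split; [|split; auto].
  - rewrite (Derive_ext_loc _ (fun _ => k)). apply Derive_const.
    destruct Lx as [e He]. exists e. intros t Ht. apply Hg, HS, He, Ht.
  - rewrite (Derive_ext_loc _ (fun _ => k)). apply Derive_const.
    destruct Ly as [e He]. exists e. intros t Ht. apply Hg, HS, He, Ht. Qed.

Lemma tangent_BB2_c p v : tangent BB2 p v -> pc v = 0.
Proof. intro H. destruct (tangent_zero BB2 p v pc 0) as [W [O [phi [x [y [_ [_ [D1 [D2 [al [be E]]]]]]]]]]]; auto.
  intros q [u [w E]]; subst; auto.
  subst. unfold add6, scal6, dx, dy; cbn [pc]. rewrite D1, D2. ring. Qed.
Lemma tangent_BB2_e p v : tangent BB2 p v -> pe v = 0.
Proof. intro H. destruct (tangent_zero BB2 p v pe 0) as [W [O [phi [x [y [_ [_ [D1 [D2 [al [be E]]]]]]]]]]]; auto.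
  intros q [u [w E]]; subst; auto.
  subst. unfold add6, scal6, dx, dy; cbn [pe]. rewrite D1, D2. ring. Qed.
Lemma tangent_BB3_c p v : tangent BB3 p v -> pc v = 0.
Proof. intro H. destruct (tangent_zero BB3 p v pc 0) as [W [O [phi [x [y [_ [_ [D1 [D2 [al [be E]]]]]]]]]]]; auto.
  intros q [u [w E]]; subst; auto.
  subst. unfold add6, scal6, dx, dy; cbn [pc]. rewrite D1, D2. ring. Qed.

Lemma tangent_BB3_da p v : tangent BB3 p v -> pd v = pa v.
Proof. intros [W [O [phi [x [y [Hch [Hxy [Hp [al [be Hv]]]]]]]]]]. subst v.
  destruct Hch as [_ [HO [Hsm [HS _]]]]. destruct (open2_loc O x y HO Hxy) as [Lx Ly].
  destruct (Hsm 1%nat) as [Ha _]. destruct Ha as [_ [Hex _]]. destruct (Hex x y Hxy) as [Ex Ey].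
  cbv beta in Ex, Ey.
  assert (Hd : forall q, BB3 q -> pd q = 1 + pa q).
  { intros q [u [w E]]; subst; cbn; ring. }
  assert (D1 : Derive (fun t => pd (phi t y)) x = Derive (fun t => pa (phi t y)) x).
  { rewrite (Derive_ext_loc _ (fun t => 1 + pa (phi t y))).
    rewrite Derive_plus; auto. rewrite Derive_const; ring. apply ex_derive_const.
    destruct Lx as [e He]. exists e. intros t Ht. apply Hd, HS, He, Ht. }
  assert (D2 : Derive (fun t => pd (phi x t)) y = Derive (fun t => pa (phi x t)) y).
  { rewrite (Derive_ext_loc _ (fun t => 1 + pa (phi x t))).
    rewrite Derive_plus; auto. rewrite Derive_const; ring. apply ex_derive_const.
    destruct Ly as [e He]. exists e. intros t Ht. apply Hd, HS, He, Ht. }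
  unfold add6, scal6, dx, dy; cbn [pa pd]. rewrite D1, D2. ring. Qed.

Lemma trans_23 : transversal_along BB2 BB3 (fun p => exists v, p = mkP6 (-1) v 0 0 0 0).
Proof. split.
  - intro p. split.
    + intros [[u [v E]] [u' [v' E']]]. subst. unfold U2, U3 in E'. inj E'. subst.
      exists v'. unfold U2. f_equal. lra.
    + intros [v E]; subst. split. exists (-1), v; auto. exists (-1), v. unfold U3; f_equal; ring.
  - intros p [v0 E] H.
    assert (T : tangent BB2 p (add6 (scal6 1 (dx U2 (-1) v0)) (scal6 0 (dy U2 (-1) v0)))).
    { exists (fun _ => True), (fun _ _ => True), U2, (-1), v0. split. apply chart_U2.
      split; auto. split. subst; auto. exists 1, 0; auto. }
    apply H in T. apply tangent_BB3_da in T. rewrite dx_U2, dy_U2 in T.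
    unfold add6, scal6 in T; cbn in T. lra. Qed.

Lemma trans_12 : transversal_along BB1t BB2 (fun p => exists v, p = mkP6 1 v 0 0 0 0).
Proof. split.
  - intro p. split.
    + intros [[[r [s E]]|[v E]] [u' [v' E']]]; subst.
      * unfold U1, U2 in E'. inj E'. subst. exists (- s). unfold U1. f_equal; ring.
      * unfold U2 in E'. inj E'. lra.
    + intros [v E]; subst. split. left. exists 0, (- v). unfold U1; f_equal; ring.
      exists 1, v; auto.
  - intros p [v0 E] H.
    assert (T : tangent BB1t p (add6 (scal6 1 (dx U1 0 (- v0))) (scal6 0 (dy U1 0 (- v0))))).
    { exists (fun q => ~ Lset q), (fun _ _ => True), U1, 0, (- v0). split. apply chart_U1.
      split; auto. split. subst; unfold U1; f_equal; ring. exists 1, 0; auto. }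
    apply H in T. apply tangent_BB2_e in T. rewrite dx_U1, dy_U1 in T.
    unfold add6, scal6 in T; cbn in T. lra. Qed.

Lemma trans_13 : transversal_along BB1t BB3 (fun p => exists v, p = mkP6 0 v 0 1 0 0).
Proof. split.
  - intro p. split.
    + intros [[[r [s E]]|[v E]] [u' [v' E']]]; subst.
      * unfold U1, U3 in E'. inj E'. subst. nra.
      * exists v; auto.
    + intros [v E]; subst. split. right. exists v; auto.
      exists 0, v. unfold U3; f_equal; ring.
  - intros p [v0 E] H.
    assert (T : tangent BB1t p (add6 (scal6 1 (dx psi 0 v0)) (scal6 0 (dy psi 0 v0)))).
    { exists (fun q => ~ Mset q), (fun _ _ => True), psi, 0, v0. split. apply chart_psi.
      split; auto. split. subst; unfold psi; f_equal; ring. exists 1, 0; auto. }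
    apply H in T. apply tangent_BB3_c in T. rewrite dx_psi, dy_psi in T.
    unfold add6, scal6 in T; cbn in T. lra. Qed.

Lemma closure_B1t p : BB1t p -> closure6 BB1 p.
Proof. intros [HB|[v E]] r Hr.
  - exists p. split; auto. unfold ball6. rewrite !Rminus_eq_0, !Rabs_R0. tauto.
  - subst. set (m := Rmin r 1). set (w := Rabs v).
    assert (Hm : 0 < m) by (apply Rmin_pos; lra).
    assert (Hmr : m <= r) by apply Rmin_l. assert (Hm1 : m <= 1) by apply Rmin_r.
    assert (Hw : 0 <= w) by apply Rabs_pos.
    assert (Hv1 : v <= w) by apply Rle_abs.
    assert (Hv2 : - v <= w) by (unfold w; rewrite <- Rabs_Ropp; apply Rle_abs).
    set (t := m / (2 * (1 + w))).
    assert (Ht : t * (2 * (1 + w)) = m) by (unfold t; field; lra).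
    assert (Ht0 : 0 < t) by (unfold t; apply Rdiv_lt_0_compat; lra).
    assert (Ht2 : 2 * t <= m) by nra.
    assert (Hvt : - (m / 2) < v * t < m / 2) by (split; nra).
    exists (psi t v). split.
    + exists (- (1 + v * t) * t ^ 2), (1 / t). unfold psi, U1. f_equal; field; lra.
    + unfold ball6, psi; cbn [pa pb pc pd pe pf].
      repeat split; apply Rabs_def1; nra. Qed.

Theorem theorem1p5 :
  (forall p : P6, BB0 p <-> ((BB1 p \/ BB2 p \/ BB3 p) /\ p <> zero6)) /\
  (closed6 BB2 /\ smooth_surface BB2 /\ diffeo_R2 BB2) /\
  (closed6 BB3 /\ smooth_surface BB3 /\ diffeo_R2 BB3) /\
  transversal_along BB2 BB3 (fun p => exists v, p = mkP6 (-1) v 0 0 0 0) /\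
  (exists BB1t : P6 -> Prop,
     (forall p, BB1 p -> BB1t p) /\ (forall p, BB1t p -> closure6 BB1 p) /\
     closed6 BB1t /\ smooth_surface BB1t /\
     transversal_along BB1t BB2 (fun p => exists v, p = mkP6 1 v 0 0 0 0) /\
     transversal_along BB1t BB3 (fun p => exists v, p = mkP6 0 v 0 1 0 0)).
Proof.
  split. exact part1.
  split. { split. exact closed_BB2. split.
    - intros p _. exists (fun _ => True), (fun _ _ => True), U2. split; auto. apply chart_U2.
    - exists U2. apply chart_U2. }
  split. { split. exact closed_BB3. split.
    - intros p _. exists (fun _ => True), (fun _ _ => True), U3. split; auto. apply chart_U3.
    - exists U3. apply chart_U3. }
  split. exact trans_23.
  exists BB1t. split. { intros p H; left; auto. }
  split. exact closure_B1t.
  split. exact closed_BB1t.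
  split. { intros p [HB|HL].
    - exists (fun q => ~ Lset q), (fun _ _ => True), U1. split. apply chart_U1.
      destruct HB as [r [s E]]. subst. intros [v E]. unfold U1 in E. inj E. nra.
    - exists (fun q => ~ Mset q), (fun _ _ => True), psi. split. apply chart_psi.
      destruct HL as [v E]. subst. intros [r E]. inj E. lra. }
  split. exact trans_12. exact trans_13.
Qed.
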